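(* Let $0<c_1\le c_2$ be constants, let $n$ be sufficiently large, let $t\in[1,n^{0.1}]$, and let $H$ be an undirected graph on $n$ vertices in which every vertex has degree between $c_1t$ and $c_2t$ and which has no cycle of length at most $8$. Then for any two vertices $u,v$ of $H^2$, the number of paths of length $2$ in $H^2$ connecting $u$ and $v$ is $O(t)$, where the implied constant depends only on $c_1,c_2$.
   Context: $H^2$ (the square of $H$) is the graph on the vertex set of $H$ in which $u\neq v$ are adjacent if and only if there is a path of length exactly $2$ between $u$ and $v$ in $H$. *)

(* Defs.v *)
From HB Require Import structures.
From mathcomp Require Import all_boot all_order all_algebra.
From mathcomp Require Import reals exp.
Set Implicit Arguments. Unset Strict Implicit. Unset Printing Implicit Defensive.

(* Simple undirected graphs: a symmetric irreflexive relation e on a finType T. *)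

Definition sq_adj (T : finType) (e : rel T) (u v : T) : bool :=
  (u != v) && [exists w, e u w && e w v].

Definition deg (T : finType) (e : rel T) (v : T) : nat := #|[set w | e v w]|.

Definition no_cycle_upto (T : finType) (e : rel T) (m : nat) : Prop :=
  forall s : seq T, uniq s -> 3 <= size s <= m -> ~~ cycle e s.

Definition n_sq_paths2 (T : finType) (e : rel T) (u v : T) : nat :=
  #|[set w | [&& w != u, w != v, sq_adj e u w & sq_adj e w v]]|.

(* Main.v *)
Require Import Defs.
From HB Require Import structures.
From mathcomp Require Import all_boot all_order all_algebra.
From mathcomp Require Import reals exp.
Import Order.TTheory GRing.Theory Num.Theory.

Section G.
Variables (T : finType) (e : rel T).

Fixpoint nobt (s : seq T) : bool :=
  if s is a :: t then (if t is _ :: c :: _ then a != c else true) && nobt t else true.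

Lemma uniq_walk (irr : irreflexive e) (nc : no_cycle_upto e 8) :
  forall p y, path e y p -> nobt (y :: p) -> size p <= 8 -> uniq (y :: p).
Proof.
elim=> [|x s IH] y //= /andP[eyx pxs] /andP[hbt nbt] hs.
have ux : uniq (x :: s) by apply: IH => //; apply: leq_trans hs.
apply/andP; split => //; apply/negP => yin.
set k := index y (x :: s).
have kl : k < size (x :: s) by rewrite index_mem.
have nyk : y \notin take k (x :: s) by rewrite in_take // ltnn.
have nth_k : nth y (x :: s) k = y by rewrite nth_index.
have hc := nc (y :: take k (x :: s)).
have uc : uniq (y :: take k (x :: s)) by rewrite /= nyk take_uniq.
have cy : cycle e (y :: take k (x :: s)).
  rewrite /= -[X in rcons _ X]nth_k -take_nth //.
  have : path e y (x :: s) by rewrite /= eyx.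
  by move/(take_path k.+1).
have szc : size (y :: take k (x :: s)) = k.+1 by rewrite /= size_take kl.
move: hc; rewrite uc szc cy /= => /(_ isT) H; suff : false by []; apply: H.

case: k kl nth_k nyk szc {uc cy} => [|[|k]] kl nth_k _ _.
- by move: eyx; rewrite -nth_k /= irr.
- by clear -hbt nth_k kl; case: s hbt nth_k kl => [|z s] //= hb nk; move: hb; rewrite nk eqxx.
- exact: leq_trans kl hs.
Qed.

Lemma closed_bt (irr : irreflexive e) (nc : no_cycle_upto e 8) p x :
  path e x p -> last x p = x -> 0 < size p <= 8 -> ~~ nobt (x :: p).
Proof.
move=> pp lp /andP[s0 s8]; apply/negP => nb.
have := uniq_walk irr nc _ _ pp nb s8.
case: p s0 pp lp {nb s8} => [|z p] //= _ _ lp /andP[]; rewrite -{1}lp.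
by rewrite mem_last.
Qed.
End G.

Local Open Scope ring_scope.

Theorem lemmaA5 (R : realType) (c1 c2 : R) :
  0 < c1 -> c1 <= c2 ->
  exists K : R, exists N0 : nat,
    forall n : nat, (N0 <= n)%N ->
    forall t : R, 1 <= t -> t <= (n%:R) `^ (10%:R)^-1 ->
    forall (T : finType) (e : rel T),
      #|T| = n -> symmetric e -> irreflexive e ->
      (forall x : T, c1 * t <= (deg e x)%:R <= c2 * t) ->
      no_cycle_upto e 8 ->
      forall u v : T, u != v -> (n_sq_paths2 e u v)%:R <= K * t.
Proof.
move=> c1p c12; exists (c2 + 1), 0%N => n _ t t1 _ T e _ sym irr hdeg nc u v uv.
have t0 : 0 <= t by apply: le_trans t1.
have c20 : 0 <= c2 by apply: le_trans c12; apply: ltW.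
rewrite /n_sq_paths2; set W := [set w | _].
have key : forall w, w \in W -> exists a b,
    [/\ e u a, e a w, e w b & e b v] /\ (w != u) && (w != v).
  move=> w; rewrite inE => /and4P[wu wv /andP[_ /existsP[a /andP[h1 h2]]]].
  by move=> /andP[_ /existsP[b /andP[h3 h4]]]; exists a, b; rewrite wu wv.
have bt := @closed_bt T e irr nc.
case: (boolP [exists m, e u m && e m v]) => [/existsP[m /andP[um mv]] | nom].
- have sub : W \subset [set w | e m w].
    apply/subsetP => w /key [a [b [[ua aw wb bv] /andP[wu wv]]]]; rewrite inE.
    have := bt [:: a; w; b; v; m; u] u.
    rewrite /= ua aw wb bv (sym v m) mv (sym m u) um /= => /(_ isT erefl isT).
    rewrite (eq_sym u w) wu wv (eq_sym v u) uv /=.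
    case: (eqVneq b m) => [<-|bm]; first by rewrite sym.
    rewrite /= andbT negbK => /eqP ab; subst b.
    have := bt [:: a; v; m; u] u.
    rewrite /= ua bv (sym v m) mv (sym m u) um /= => /(_ isT erefl isT).
    by rewrite uv (eq_sym v u) uv /= andbT negbK => /eqP <-.
  apply: (@le_trans _ _ (deg e m)%:R).
    by rewrite ler_nat; apply: subset_leq_card.
  have /andP[_ h] := hdeg m; apply: le_trans h _.
  by rewrite mulrDl mul1r lerDl.
- move/existsPn: nom => nom.
  have : (#|W| <= 1)%N.
    apply/card_le1_eqP => w1 w2 /key [a1 [b1 [[ua1 aw1 wb1 bv1] /andP[wu1 wv1]]]].
    move=> /key [a2 [b2 [[ua2 aw2 wb2 bv2] /andP[wu2 wv2]]]].
    have ab1 : a1 != b1 by apply/eqP => E; move: (nom a1); rewrite ua1 E bv1.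
    have ab2 : b2 != a2 by apply/eqP => E; move: (nom a2); rewrite ua2 -E bv2.
    have := bt [:: a1; w1; b1; v; b2; w2; a2; u] u.
    rewrite /= ua1 aw1 wb1 bv1 (sym v b2) bv2 (sym b2 w2) wb2 (sym w2 a2) aw2.
    rewrite (sym a2 u) ua2 /= => /(_ isT erefl isT).
    rewrite (eq_sym u w1) wu1 ab1 wv1 (eq_sym v w2) wv2 ab2 wu2 /= andbT negbK.
    move=> /eqP bb; subst b2.
    have := bt [:: a1; w1; b1; w2; a2; u] u.
    rewrite /= ua1 aw1 wb1 (sym b1 w2) wb2 (sym w2 a2) aw2.
    rewrite (sym a2 u) ua2 /= => /(_ isT erefl isT).
    by rewrite (eq_sym u w1) wu1 ab1 ab2 wu2 /= andbT negbK => /eqP ->.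
  rewrite -(ler_nat R) => h; apply: le_trans h _.
  apply: le_trans t1 _.
  by rewrite mulrDl mul1r lerDr mulr_ge0.
Qed.
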